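(* Let $G=(\mu,\mathcal{V},\mathcal{W},\mathcal{E})$ be a weighted bipartite graph with edge density $\delta>0$. If $G$ is $\theta$-maximal for some $\theta>1$, then $G$ is $(\frac{\theta-1}{\theta}\cdot\delta)$-connected.
   Context: A weighted bipartite graph is $G=(\mu,\mathcal{V},\mathcal{W},\mathcal{E})$ with $\mu:\mathbb{R}_{>0}\to\mathbb{R}_{>0}$, $\mathcal{V},\mathcal{W}$ finite sets of positive reals, $\mathcal{E}\subseteq\mathcal{V}\times\mathcal{W}$. $\mu(\mathcal{T})=\sum_{t\in\mathcal{T}}\mu(t)$ and $\mu(\mathcal{E})=\sum_{(v,w)\in\mathcal{E}}\mu(v)\mu(w)$. Edge density $\delta(G)=\mu(\mathcal{E})/(\mu(\mathcal{V})\mu(\mathcal{W}))$ if $\mathcal{E}\ne\emptyset$, else $0$. For $\theta\ge1$, $\mu^{(\theta)}(G)=\delta(G)^\theta\mu(\mathcal{V})\mu(\mathcal{W})$. A subgraph of $G$ is $(\mu,\mathcal{V}',\mathcal{W}',\mathcal{E}')$ with $\mathcal{V}'\subseteq\mathcal{V}$, $\mathcal{W}'\subseteq\mathcal{W}$, $\mathcal{E}'\subseteq\mathcal{E}\cap(\mathcal{V}'\times\mathcal{W}')$. $G$ is $\theta$-maximal if $\mu^{(\theta)}(G)\ge\mu^{(\theta)}(G')$ for every subgraph $G'$. Neighbourhoods: $\Gamma_G(v)=\{w\in\mathcal{W}:(v,w)\in\mathcal{E}\}$ for $v\in\mathcal{V}$ and $\Gamma_G(w)=\{v\in\mathcal{V}:(v,w)\in\mathcal{E}\}$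 for $w\in\mathcal{W}$. $G$ is $\eta$-connected if $\mu(\Gamma_G(v))\ge\eta\,\mu(\mathcal{W})$ for all $v\in\mathcal{V}$ and $\mu(\Gamma_G(w))\ge\eta\,\mu(\mathcal{V})$ for all $w\in\mathcal{W}$. *)

(* Defs.v *)
From HB Require Import structures.
From mathcomp Require Import all_boot all_order all_algebra.
From mathcomp Require Import finmap.
From mathcomp Require Import reals exp.
Set Implicit Arguments. Unset Strict Implicit. Unset Printing Implicit Defensive.
Import Order.TTheory GRing.Theory Num.Theory.
Local Open Scope ring_scope.
Local Open Scope fset_scope.

Section Defs.
Variable R : realType.
Implicit Types (mu : R -> R) (V W : {fset R}) (E : {fset R * R}).

Definition muS mu V : R := \sum_(v <- V) mu v.
Definition muE mu E : R := \sum_(e <- E) mu e.1 * mu e.2.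

Definition wbgraph mu V W E : Prop :=
  (forall x : R, 0 < x -> 0 < mu x) /\
  (forall v, v \in V -> 0 < v) /\ (forall w, w \in W -> 0 < w) /\
  (forall e, e \in E -> e.1 \in V /\ e.2 \in W).

Definition density mu V W E : R :=
  if E == fset0 then 0 else muE mu E / (muS mu V * muS mu W).

Definition mu_theta (theta : R) mu V W E : R :=
  powR (density mu V W E) theta * muS mu V * muS mu W.

Definition subgraph V' W' E' V W E : Prop :=
  V' `<=` V /\ W' `<=` W /\ E' `<=` E /\
  (forall e, e \in E' -> e.1 \in V' /\ e.2 \in W').

Definition theta_maximal (theta : R) mu V W E : Prop :=
  forall V' W' E', subgraph V' W' E' V W E ->
    mu_theta theta mu V' W' E' <= mu_theta theta mu V W E.

Definition nbhdV V W E (v : R) : {fset R} := [fset w in W | (v, w) \in E].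
Definition nbhdW V W E (w : R) : {fset R} := [fset v in V | (v, w) \in E].

Definition eta_connected (eta : R) mu V W E : Prop :=
  (forall v, v \in V -> eta * muS mu W <= muS mu (nbhdV V W E v)) /\
  (forall w, w \in W -> eta * muS mu V <= muS mu (nbhdW V W E w)).
End Defs.

(* Main.v *)
Require Import Defs.
From HB Require Import structures.
From mathcomp Require Import all_boot all_order all_algebra.
From mathcomp Require Import finmap.
From mathcomp Require Import reals exp.
From mathcomp Require Import ring lra.
Import Order.TTheory GRing.Theory Num.Theory.
Local Open Scope fset_scope.
Local Open Scope ring_scope.

Lemma core (R : realType) (th SV' SW ME' a d : R) :
  1 < th -> 0 < SV' -> 0 < SW -> 0 < ME' -> 0 < a -> 0 <= d ->
  d * (SV' + a) < (th - 1) / th * (ME' + a * d) ->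
  powR ((ME' + a * d) / ((SV' + a) * SW)) th * (SV' + a) * SW <
  powR (ME' / (SV' * SW)) th * SV' * SW.
Proof.
move=> th1 SV'0 SW0 ME'0 a0 d0 H.
set SV := SV' + a. set ME := ME' + a * d.
have SV0 : 0 < SV by rewrite /SV; lra.
have ME0 : 0 < ME by rewrite /ME; nra.
have th0 : 0 < th by lra.
set c := (th - 1) / th.
have c0 : 0 < c by rewrite /c divr_gt0 //; lra.
have c1 : c * th = th - 1 by rewrite /c mulrVK // ?unitfE gt_eqF.
set r := ME' / ME. set s := SV' / SV.
have r0 : 0 < r by rewrite divr_gt0.
have s0 : 0 < s by rewrite divr_gt0.
set dl := ME / (SV * SW).
have dl0 : 0 < dl by rewrite divr_gt0 // mulr_gt0.
have Edl : ME' / (SV' * SW) = dl * (r * s^-1).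
  rewrite /dl /r /s; field; rewrite ?gt_eqF //; lra.
have ESV : SV' = SV * s by rewrite /s mulrC divfK // gt_eqF.
rewrite Edl ESV (powRM _ (ltW dl0)) ?mulr_ge0 ?invr_ge0 ?(ltW r0) ?(ltW s0) //.
rewrite (powRM _ (ltW r0)) ?invr_ge0 ?(ltW s0) //.
have P0 : 0 < powR dl th * SV * SW by rewrite !mulr_gt0 // powR_gt0.
have Hss : powR s th * powR s^-1 th = 1.
  by rewrite -powRM ?invr_ge0 ?(ltW s0) // mulfV ?gt_eqF // (powR1 R).
have Hs1 : powR s th = s * powR s (th - 1) by rewrite mulr_powRB1 // ltW.
have key : powR s (th - 1) < powR r th.
  rewrite -c1 powRrM; apply: gt0_ltr_powR => //; rewrite ?nnegrE ?powR_ge0 ?ltW //.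
  have Y := @conjugate_powR R (powR s c) 1 c^-1 th (powR_ge0 _ _) ler01.
  have ci : 0 < c^-1 by rewrite invr_gt0.
  have ct : c^-1^-1 + th^-1 = 1 by rewrite invrK /c; field; rewrite gt_eqF.
  have Hy := Y ci th0 ct.
  have pc : powR (powR s c) c^-1 = s by rewrite -powRrM mulfV ?gt_eqF // powRr1 // ltW.
  have p1 : powR 1 th = 1 by rewrite /powR oner_eq0 ln1 mulr0 expR0.
  rewrite mulr1 pc p1 invrK in Hy.
  apply: (le_lt_trans Hy).
  have -> : s = 1 - a / SV by rewrite /s /SV; field; rewrite gt_eqF.
  have -> : r = 1 - a * d / ME by rewrite /r /ME; field; rewrite gt_eqF.
  have E1 : (1 - a / SV) * c + 1 / th = 1 - c * a / SV.
    rewrite /c; field; rewrite ?gt_eqF //.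
  rewrite E1.
  suff : a * d / ME < c * a / SV by lra.
  rewrite ltr_pdivrMr // mulrAC ltr_pdivlMr // -mulrA [c * _]mulrC -mulrA ltr_pM2l //.

set X := powR dl th * SV * SW.
have -> : powR dl th * (powR r th * powR s^-1 th) * (SV * s) * SW
   = X * (powR r th * powR s^-1 th * s) by rewrite /X; ring.
rewrite -[X in X < _]mulr1 ltr_pM2l //.
have ps0 : 0 < powR s (th - 1) by rewrite powR_gt0.
have -> : powR s^-1 th = (s * powR s (th - 1))^-1.
  rewrite -Hs1; have ps : powR s th != 0 by rewrite gt_eqF // powR_gt0.
  by apply: (mulfI ps); rewrite Hss mulfV.
rewrite invfM [X in 1 < X](_ : _ = powR r th / powR s (th - 1)); last first.
  by field; rewrite !gt_eqF.
by rewrite ltr_pdivlMr // mul1r.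
all: exact: ltW.
Qed.

Lemma fsum_ge0 (R : realType) (T : choiceType) (A : {fset T}) (F : T -> R) :
  (forall x, x \in A -> 0 <= F x) -> 0 <= \sum_(x <- A) F x.
Proof. by move=> H; rewrite big_seq; apply: sumr_ge0 => x /H. Qed.

Lemma fsum_gt0 (R : realType) (T : choiceType) (A : {fset T}) (F : T -> R) x :
  (forall x, x \in A -> 0 < F x) -> x \in A -> 0 < \sum_(x <- A) F x.
Proof.
move=> H xA; rewrite (big_fsetD1 x) //=; apply: ltr_wpDr; last exact: H.
by apply: fsum_ge0 => y; rewrite in_fsetD1 => /andP[_ /H /ltW].
Qed.

Lemma splitV (R : realType) (mu : R -> R) (V W : {fset R}) (E : {fset R * R}) v :
  (forall e, e \in E -> e.2 \in W) ->
  muE mu E = muE mu [fset e in E | e.1 != v] + mu v * muS mu (nbhdV V W E v).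
Proof.
move=> EW.
rewrite /muE (big_fsetID _ (fun e : R * R => e.1 == v)) /= addrC; congr (_ + _).
rewrite (@eq_fbigr _ _ _ _ _ _ _ (fun e : R * R => mu v * mu e.2)); last first.
  by move=> e; rewrite !inE /= => /andP[_ /eqP ->].
rewrite -big_distrr /=; congr (_ * _).
rewrite /muS /nbhdV.
have -> : [fset w in W | (v, w) \in E] = [fset e.2 | e in [fset e in E | e.1 == v]].
  apply/fsetP => w; rewrite !inE /=.
  apply/idP/imfsetP => [/andP[wW vwE]|[e]]; first by exists (v, w); rewrite //= !inE vwE eqxx.
  rewrite !inE /= => /andP[eE /eqP e1] ->; rewrite EW //=.
  by move: eE e1; case: e => a b /= eE <-.
rewrite [in RHS]big_imfset /=; last first.
  move=> [a b] [a' b']; rewrite !inE /= => /andP[_ /eqP ->] /andP[_ /eqP ->] -> //.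
by [].
Qed.

Lemma splitW (R : realType) (mu : R -> R) (V W : {fset R}) (E : {fset R * R}) w :
  (forall e, e \in E -> e.1 \in V) ->
  muE mu E = muE mu [fset e in E | e.2 != w] + mu w * muS mu (nbhdW V W E w).
Proof.
move=> EV.
rewrite /muE (big_fsetID _ (fun e : R * R => e.2 == w)) /= addrC; congr (_ + _).
rewrite (@eq_fbigr _ _ _ _ _ _ _ (fun e : R * R => mu w * mu e.1)); last first.
  by move=> e; rewrite !inE /= => /andP[_ /eqP ->]; rewrite mulrC.
rewrite -big_distrr /=; congr (_ * _).
rewrite /muS /nbhdW.
have -> : [fset v in V | (v, w) \in E] = [fset e.1 | e in [fset e in E | e.2 == w]].
  apply/fsetP => v; rewrite !inE /=.
  apply/idP/imfsetP => [/andP[vV vwE]|[e]]; first by exists (v, w); rewrite //= !inE vwE eqxx.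
  rewrite !inE /= => /andP[eE /eqP e1] ->; rewrite EV //=.
  by move: eE e1; case: e => a b /= eE <-.
rewrite [in RHS]big_imfset /=; last first.
  move=> [a b] [a' b']; rewrite !inE /= => /andP[_ /eqP ->] /andP[_ /eqP ->] -> //.
by [].
Qed.

Lemma bound (R : realType) (th SV SW ME SV' ME' a d : R) :
  1 < th -> 0 < SW -> 0 < a -> 0 <= d -> 0 <= SV' -> 0 <= ME' -> 0 < ME ->
  SV = SV' + a -> ME = ME' + a * d ->
  (0 < ME' -> 0 < SV') ->
  (0 < ME' -> powR (ME' / (SV' * SW)) th * SV' * SW <= powR (ME / (SV * SW)) th * SV * SW) ->
  (th - 1) / th * (ME / (SV * SW)) * SW <= d.
Proof.
move=> th1 SW0 a0 d0 SV'0 ME'0 ME0 ESV EME HSV Hmax.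
have SV0 : 0 < SV by rewrite ESV; lra.
have th0 : 0 < th by lra.
rewrite leNgt; apply/negP => Hlt.
have Hd : d * SV < (th - 1) / th * ME.
  have E1 : (th - 1) / th * (ME / (SV * SW)) * SW = ((th - 1) / th * ME) / SV.
    by field; rewrite !gt_eqF.
  by rewrite E1 ltr_pdivlMr // in Hlt.
move: ME'0; rewrite le_eqVlt => /predU1P[ME'0|ME'0].
  have c1 : (th - 1) / th * ME < ME.
    by rewrite -[X in _ < X]mul1r ltr_pM2r // ltr_pdivrMr // mul1r; lra.
  have : a * d <= SV * d by rewrite ler_wpM2r // ESV; lra.
  rewrite -ME'0 add0r in EME; lra.
have := Hmax ME'0; rewrite leNgt => /negP; apply.
rewrite ESV EME; apply: core => //; first exact: HSV.
by rewrite -ESV -EME.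
Qed.

Lemma muE_ne (R : realType) (mu : R -> R) (E : {fset R * R}) :
  0 < muE mu E -> E != fset0.
Proof. by apply: contraTneq => ->; rewrite /muE big_seq_fset0 ltxx. Qed.

Theorem lemma5p9 (R : realType) (mu : R -> R) (V W : {fset R}) (E : {fset R * R})
  (theta : R) :
  wbgraph mu V W E ->
  0 < density mu V W E ->
  1 < theta ->
  theta_maximal theta mu V W E ->
  eta_connected ((theta - 1) / theta * density mu V W E) mu V W E.
Proof.
move=> [mupos [Vpos [Wpos EVW]]] dpos th1 Hmax.
have En0 : E != fset0.
  by move: dpos; rewrite /density; case: ifP => // _; rewrite ltxx.
have [e0 e0E] := fset0Pn _ En0.
have muV : forall x, x \in V -> 0 < mu x by move=> x /Vpos /mupos.
have muW : forall x, x \in W -> 0 < mu x by move=> x /Wpos /mupos.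
have muEp : forall e, e \in E -> 0 < mu e.1 * mu e.2.
  by move=> e /EVW [/muV h1 /muW h2]; apply: mulr_gt0.
have ME0 : 0 < muE mu E by exact: (@fsum_gt0 _ _ _ _ _ muEp e0E).
have SV0 : 0 < muS mu V by exact: (@fsum_gt0 _ _ _ _ _ muV (EVW _ e0E).1).
have SW0 : 0 < muS mu W by exact: (@fsum_gt0 _ _ _ _ _ muW (EVW _ e0E).2).
rewrite /density (negbTE En0); split.
- move=> v vV.
  set V' := V `\ v; set E' := [fset e in E | e.1 != v].
  have sg : subgraph V' W E' V W E.
    split; first exact: fsubsetDl.
    split; first exact: fsubset_refl.
    split; first by apply/fsubsetP => e; rewrite !inE => /andP[].
    move=> e; rewrite !inE => /andP[eE e1]; have [h1 h2] := EVW _ eE.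
    by rewrite h1 h2 e1.
  have hmax := Hmax _ _ _ sg.
  apply: (@bound _ _ _ _ _ (muS mu V') (muE mu E') (mu v)) => //.
  + exact: muV.
  + apply: fsum_ge0 => x; rewrite !inE => /andP[/muW /ltW] //.
  + by apply: fsum_ge0 => x; rewrite !inE => /andP[_ /muV /ltW].
  + by apply: fsum_ge0 => x; rewrite !inE => /andP[/muEp /ltW].
  + by rewrite /muS (big_fsetD1 v) //= addrC.
  + by apply: splitV => e /EVW [].
  + move=> /muE_ne /fset0Pn [e eE']; apply: (@fsum_gt0 _ _ _ _ e.1).
      by move=> x; rewrite !inE => /andP[_ /muV].
    by move: eE'; rewrite !inE => /andP[/EVW [h1 _] ->]; rewrite h1.
  + move=> /muE_ne E'n0; move: hmax; rewrite /mu_theta /density (negbTE E'n0) (negbTE En0).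
    done.
- move=> w wW.
  set W' := W `\ w; set E' := [fset e in E | e.2 != w].
  have sg : subgraph V W' E' V W E.
    split; first exact: fsubset_refl.
    split; first exact: fsubsetDl.
    split; first by apply/fsubsetP => e; rewrite !inE => /andP[].
    move=> e; rewrite !inE => /andP[eE e1]; have [h1 h2] := EVW _ eE.
    by rewrite h1 h2 e1.
  have hmax := Hmax _ _ _ sg.
  rewrite [muS mu V * _]mulrC.
  apply: (@bound _ _ _ _ _ (muS mu W') (muE mu E') (mu w)) => //.
  + exact: muW.
  + by apply: fsum_ge0 => x; rewrite !inE => /andP[/muV /ltW].
  + by apply: fsum_ge0 => x; rewrite !inE => /andP[_ /muW /ltW].
  + by apply: fsum_ge0 => x; rewrite !inE => /andP[/muEp /ltW].
  + by rewrite /muS (big_fsetD1 w) //= addrC.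
  + by apply: splitW => e /EVW [].
  + move=> /muE_ne /fset0Pn [e eE']; apply: (@fsum_gt0 _ _ _ _ e.2).
      by move=> x; rewrite !inE => /andP[_ /muW].
    by move: eE'; rewrite !inE => /andP[/EVW [_ h2] ->]; rewrite h2.
  + move=> /muE_ne E'n0; move: hmax; rewrite /mu_theta /density (negbTE E'n0) (negbTE En0).
    by rewrite [muS mu W' * _]mulrC [muS mu W * _]mulrC -!mulrA [muS mu W' * _]mulrC [muS mu W * _]mulrC.
Qed.
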